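(* Let $\mathcal{C}$ be a covering of a finite set $E$. For $x\in E$ let $N(x)=\bigcap\{K\in\mathcal{C}:x\in K\}$, and define $XH:2^E\to 2^E$ by $XH(X)=\{x\in E:N(x)\cap X\neq\emptyset\}$. Then $\{N(x):x\in E\}$ forms a partition of $E$ if and only if $XH$ is the closure operator of some matroid on $E$.
   Context: A covering of $E$ is a family of nonempty subsets of $E$ with union $E$. ''$\{N(x):x\in E\}$ forms a partition'' means that the distinct sets among the $N(x)$ are pairwise disjoint (their union is $E$ since $x\in N(x)$). The closure operator of a matroid with rank function $r$ is $cl(X)=\{a\in E:r(X\cup\{a\})=r(X)\}$. *)

(* Defs.v *)
(* The finite ground set E is modelled as a finType T. *)
From mathcomp Require Import all_boot.
Set Implicit Arguments. Unset Strict Implicit. Unset Printing Implicit Defensive.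

Section Defs.
Variable T : finType.

Definition covering (C : {set {set T}}) : Prop :=
  (forall K, K \in C -> K != set0) /\ \bigcup_(K in C) K = [set: T].

Definition Nset (C : {set {set T}}) (x : T) : {set T} :=
  \bigcap_(K in C | x \in K) K.

Definition XH (C : {set {set T}}) (X : {set T}) : {set T} :=
  [set x | Nset C x :&: X != set0].

Definition N_partition (C : {set {set T}}) : Prop :=
  forall x y : T, Nset C x != Nset C y -> [disjoint Nset C x & Nset C y].

Definition matroid_rank (r : {set T} -> nat) : Prop :=
  [/\ forall X : {set T}, r X <= #|X|,
      forall X Y : {set T}, X \subset Y -> r X <= r Y &
      forall X Y : {set T}, r (X :|: Y) + r (X :&: Y) <= r X + r Y].

Definition mclosure (r : {set T} -> nat) (X : {set T}) : {set T} :=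
  [set a | r (a |: X) == r X].

End Defs.

(* Main.v *)
Require Import Defs.
From mathcomp Require Import all_boot.

Lemma Nself (T : finType) (C : {set {set T}}) x : x \in Nset C x.
Proof. by apply/bigcapP => K /andP[]. Qed.

Lemma Nsub (T : finType) (C : {set {set T}}) x y :
  y \in Nset C x -> Nset C y \subset Nset C x.
Proof.
move=> yx; apply/subsetP=> w wy; apply/bigcapP => K /andP[KC xK].
have yK : y \in K by move/bigcapP: yx => /(_ K); rewrite KC xK; apply.
by move/bigcapP: wy => /(_ K); rewrite KC yK; apply.
Qed.

Lemma XH1 (T : finType) (C : {set {set T}}) x z :
  (x \in XH C [set z]) = (z \in Nset C x).
Proof.
rewrite inE; apply/idP/idP.
  by case/set0Pn => w; rewrite !inE => /andP[H /eqP e]; rewrite -e.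
by move=> H; apply/set0Pn; exists z; rewrite !inE H eqxx.
Qed.

Theorem theorem10 (T : finType) (C : {set {set T}}) :
  covering C ->
  (N_partition C <->
   exists r : {set T} -> nat, matroid_rank r /\ forall X, XH C X = mclosure r X).
Proof.
move=> _; split.
  move=> HP; exists (fun X : {set T} => #|Nset C @: X|); split.
    split.
    - by move=> X; apply: leq_imset_card.
    - by move=> X Y XY; apply/subset_leq_card/imsetS.
    - move=> X Y; rewrite imsetU -(cardsUI (Nset C @: X)) leq_add2l.
      by apply/subset_leq_card; rewrite subsetI !imsetS // ?subsetIl ?subsetIr.
  move=> X; apply/setP=> a; rewrite !inE imsetU1 cardsU1 addnC.
  have -> : (#|Nset C @: X| + (Nset C a \notin Nset C @: X) ==
             #|Nset C @: X|) = (Nset C a \in Nset C @: X).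
    by case: (Nset C a \in _); rewrite /= ?addn0 ?eqxx // addn1 (gtn_eqF (ltnSn _)).
  apply/idP/idP.
    case/set0Pn => w; rewrite inE => /andP[wa wX].
    apply/imsetP; exists w => //.
    case: (eqVneq (Nset C a) (Nset C w)) => // /HP /disjointFr/(_ wa).
    by rewrite Nself.
  case/imsetP => w wX ->; apply/set0Pn; exists w; rewrite inE wX andbT.
  exact: Nself.
case=> r [[Hb Hm _] Hcl].
have r0 : r set0 = 0.
  by apply/eqP; rewrite -leqn0; move: (Hb set0); rewrite cards0.
have sym : forall x z, z \in Nset C x -> x \in Nset C z.
  move=> x z zx.
  have h1 : x \in mclosure r [set z] by rewrite -Hcl XH1.
  have h2 : x \notin mclosure r set0.
    by rewrite -Hcl inE setI0 eqxx.
  rewrite -XH1 Hcl inE.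
  move: h1 h2; rewrite !inE setU0 r0 => /eqP e1 rx.
  have rx1 : r [set x] = 1.
    by move: (Hb [set x]); rewrite cards1; case: (r _) rx => // [[|]].
  have rz : r [set z] = 1.
    move: (Hb [set z]); rewrite cards1; case: (r [set z]) e1 => // [|[|]] //.
    move=> e1 _; move: (Hm [set x] (x |: [set z])); rewrite subsetUl rx1 e1.
    by move=> /(_ isT).
  rewrite setUC rx1.
  by rewrite e1 rz.
have key : forall x z, z \in Nset C x -> Nset C x = Nset C z.
  move=> x z zx; apply/eqP; rewrite eqEsubset (@Nsub _ _ _ _ zx) andbT.
  exact: (@Nsub _ _ _ _ (sym _ _ zx)).
move=> x y H; rewrite -setI_eq0; apply/eqP/setP=> z; rewrite !inE.
apply/negP=> /andP[zx zy]; move/negP: H; apply.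
by rewrite (key _ _ zx) (key _ _ zy).
Qed.
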